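(* Let $A$ be a Banach algebra and $a_0\in Z(A)\setminus\{0\}$ with $\|a_0\|\le 1$. Then for every integer $n\ge 3$: (i) $Mul_n(A)\bullet_{a_0}Mul_2(A)\subseteq Mul_2(A)$; (ii) $Mul_{n-1}(A)$ is a closed left ideal of $(Mul_n(A),\bullet_{a_0})$, so that $Mul_2(A)\lhd Mul_3(A)\lhd\cdots\lhd Mul_{n-1}(A)\lhd Mul_n(A)\lhd\cdots$.
   Context: $Z(A)$ is the center of $A$. For $m\ge 2$, $Mul_m(A)$ is the set of bounded linear maps $T:A\to A$ with $T(a_1\cdots a_m)=a_1T(a_2\cdots a_m)=T(a_1\cdots a_{m-1})a_m$ for all $a_i\in A$. On $Mul_n(A)$ the product is $S\bullet_{a_0}T(a)=S(a_0^{n-2}T(a))$. *)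

(* Defs.v *)
(* norms are real-valued (Stdlib R); the scalar field is an
   abstract valued field (covers R and C). *)
From Stdlib Require Import Reals.
Open Scope R_scope.

Record ValField := {
  vK :> Type;
  v0 : vK; v1 : vK;
  vadd : vK -> vK -> vK; vmul : vK -> vK -> vK;
  vopp : vK -> vK; vinv : vK -> vK;
  vabs : vK -> R;
  vadd_assoc : forall x y z, vadd x (vadd y z) = vadd (vadd x y) z;
  vadd_comm : forall x y, vadd x y = vadd y x;
  vadd_0 : forall x, vadd v0 x = x;
  vadd_opp : forall x, vadd x (vopp x) = v0;
  vmul_assoc : forall x y z, vmul x (vmul y z) = vmul (vmul x y) z;
  vmul_comm : forall x y, vmul x y = vmul y x;
  vmul_1 : forall x, vmul v1 x = x;
  vmul_addl : forall x y z, vmul (vadd x y) z = vadd (vmul x z) (vmul y z);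
  v1_neq_0 : v1 <> v0;
  vmul_inv : forall x, x <> v0 -> vmul x (vinv x) = v1;
  vabs_nonneg : forall x, 0 <= vabs x;
  vabs_eq0 : forall x, vabs x = 0 <-> x = v0;
  vabs_mul : forall x y, vabs (vmul x y) = vabs x * vabs y;
  vabs_triangle : forall x y, vabs (vadd x y) <= vabs x + vabs y
}.

Record BanachAlgebra (F : ValField) := {
  ba :> Type;
  b0 : ba;
  badd : ba -> ba -> ba;
  bopp : ba -> ba;
  bscal : F -> ba -> ba;
  bmul : ba -> ba -> ba;
  bnorm : ba -> R;
  badd_assoc : forall x y z, badd x (badd y z) = badd (badd x y) z;
  badd_comm : forall x y, badd x y = badd y x;
  badd_0 : forall x, badd b0 x = x;
  badd_opp : forall x, badd x (bopp x) = b0;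
  bscal_1 : forall x, bscal (v1 F) x = x;
  bscal_assoc : forall c d x, bscal c (bscal d x) = bscal (vmul F c d) x;
  bscal_addr : forall c x y, bscal c (badd x y) = badd (bscal c x) (bscal c y);
  bscal_addl : forall c d x, bscal (vadd F c d) x = badd (bscal c x) (bscal d x);
  bmul_assoc : forall x y z, bmul x (bmul y z) = bmul (bmul x y) z;
  bmul_addl : forall x y z, bmul (badd x y) z = badd (bmul x z) (bmul y z);
  bmul_addr : forall x y z, bmul x (badd y z) = badd (bmul x y) (bmul x z);
  bmul_scall : forall c x y, bmul (bscal c x) y = bscal c (bmul x y);
  bmul_scalr : forall c x y, bmul x (bscal c y) = bscal c (bmul x y);
  bnorm_eq0 : forall x, bnorm x = 0 <-> x = b0;
  bnorm_triangle : forall x y, bnorm (badd x y) <= bnorm x + bnorm y;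
  bnorm_scal : forall c x, bnorm (bscal c x) = vabs F c * bnorm x;
  bnorm_mul : forall x y, bnorm (bmul x y) <= bnorm x * bnorm y;
  bcomplete : forall u : nat -> ba,
    (forall e, 0 < e -> exists N, forall m n, (N <= m)%nat -> (N <= n)%nat ->
        bnorm (badd (u m) (bopp (u n))) < e) ->
    exists l, forall e, 0 < e -> exists N, forall n, (N <= n)%nat ->
        bnorm (badd (u n) (bopp l)) < e
}.

Arguments b0 {F} _.
Arguments badd {F _} _ _.
Arguments bopp {F _} _.
Arguments bscal {F _} _ _.
Arguments bmul {F _} _ _.
Arguments bnorm {F _} _.

Section Defs.
Variables (F : ValField) (A : BanachAlgebra F).

Definition in_center (z : A) : Prop := forall a : A, bmul z a = bmul a z.

Definition bounded_linear (T : A -> A) : Prop :=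
  (forall x y, T (badd x y) = badd (T x) (T y)) /\
  (forall c x, T (bscal c x) = bscal c (T x)) /\
  (exists M : R, forall x, bnorm (T x) <= M * bnorm x).

(* prodn a k l = a_k a_(k+1) ... a_(k+l)  (l+1 factors). *)
Fixpoint prodn (a : nat -> A) (k l : nat) : A :=
  match l with
  | O => a k
  | S l' => bmul (a k) (prodn a (S k) l')
  end.

(* Mul_m(A): with a_1,...,a_m :
   a1...am = prodn a 1 (m-1), a2...am = prodn a 2 (m-2),
   a1...a_(m-1) = prodn a 1 (m-2). *)
Definition Mul (m : nat) (T : A -> A) : Prop :=
  bounded_linear T /\
  forall a : nat -> A,
    T (prodn a 1 (m - 1)) = bmul (a 1%nat) (T (prodn a 2 (m - 2))) /\
    T (prodn a 1 (m - 1)) = bmul (T (prodn a 1 (m - 2))) (a m).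

(* x ^ (k+1) *)
Fixpoint apow1 (x : A) (k : nat) : A :=
  match k with
  | O => x
  | S k' => bmul x (apow1 x k')
  end.

(* The product on Mul_n(A): (S •_{a0} T)(a) = S(a0^(n-2) T(a)), n >= 3. *)
Definition bullet (n : nat) (a0 : A) (S T : A -> A) : A -> A :=
  fun a => S (bmul (apow1 a0 (n - 3)) (T a)).

Definition op_converges (Tk : nat -> A -> A) (T : A -> A) : Prop :=
  forall e, 0 < e -> exists N, forall k, (N <= k)%nat ->
    forall x, bnorm (badd (Tk k x) (bopp (T x))) <= e * bnorm x.

Definition closed_left_ideal (n : nat) (a0 : A) (I : (A -> A) -> Prop) : Prop :=
  (forall T, I T -> Mul n T) /\
  I (fun _ => b0 A) /\
  (forall S T, I S -> I T -> I (fun x => badd (S x) (T x))) /\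
  (forall (c : F) T, I T -> I (fun x => bscal c (T x))) /\
  (forall S T, Mul n S -> I T -> I (bullet n a0 S T)) /\
  (forall Tk T, (forall k, I (Tk k)) -> Mul n T -> op_converges Tk T -> I T).

End Defs.
Arguments in_center {F A} _.
Arguments Mul {F A} _ _.
Arguments bullet {F A} _ _ _ _ _.
Arguments closed_left_ideal {F A} _ _ _.
Arguments bounded_linear {F A} _.
Arguments prodn {F A} _ _ _.
Arguments apow1 {F A} _ _.
Arguments op_converges {F A} _ _.

(* Main.v *)
Require Import Defs.
From Stdlib Require Import Reals Lra Lia.
Open Scope R_scope.

Section Aux.
Context {F : ValField} {A : BanachAlgebra F}.

Lemma addr0 (x : A) : badd x (b0 A) = x.
Proof. rewrite badd_comm. apply badd_0. Qed.

Lemma addNr (x : A) : badd (bopp x) x = b0 A.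
Proof. rewrite badd_comm. apply badd_opp. Qed.

Lemma shuffle (x y z : A) : badd (badd x (bopp y)) (badd y z) = badd x z.
Proof.
  rewrite badd_assoc. rewrite <- (badd_assoc _ _ x (bopp y) y).
  rewrite addNr, addr0. reflexivity.
Qed.

Lemma opp_uniq (x y : A) : badd x y = b0 A -> y = bopp x.
Proof.
  intro H. rewrite <- (badd_0 _ _ y). rewrite <- (addNr x).
  rewrite <- badd_assoc, H, addr0. reflexivity.
Qed.

Lemma oppK (x : A) : bopp (bopp x) = x.
Proof. symmetry. apply opp_uniq. apply addNr. Qed.

Lemma subr0_eq (x y : A) : badd x (bopp y) = b0 A -> x = y.
Proof.
  intro H. apply opp_uniq in H.
  rewrite <- (oppK x). rewrite <- (oppK y). rewrite H. reflexivity.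
Qed.

Lemma addxx (x : A) : badd x x = x -> x = b0 A.
Proof.
  intro H.
  assert (H0 : badd (badd x x) (bopp x) = badd x (bopp x)) by (rewrite H; reflexivity).
  rewrite <- badd_assoc, badd_opp, addr0 in H0. exact H0.
Qed.

Lemma mul0r (x : A) : bmul x (b0 A) = b0 A.
Proof. apply addxx. rewrite <- bmul_addr, badd_0. reflexivity. Qed.

Lemma mul0l (x : A) : bmul (b0 A) x = b0 A.
Proof. apply addxx. rewrite <- bmul_addl, badd_0. reflexivity. Qed.

Lemma bmul_oppr (x y : A) : bmul x (bopp y) = bopp (bmul x y).
Proof. apply opp_uniq. rewrite <- bmul_addr, badd_opp, mul0r. reflexivity. Qed.

Lemma bmul_oppl (x y : A) : bmul (bopp x) y = bopp (bmul x y).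
Proof. apply opp_uniq. rewrite <- bmul_addl, badd_opp, mul0l. reflexivity. Qed.

Lemma scal0 (c : F) : bscal c (b0 A) = b0 A.
Proof. apply addxx. rewrite <- bscal_addr, badd_0. reflexivity. Qed.

Lemma scal_v0 (x : A) : bscal (v0 F) x = b0 A.
Proof. apply addxx. rewrite <- bscal_addl, vadd_0. reflexivity. Qed.

Lemma opp_scal (x : A) : bopp x = bscal (vopp F (v1 F)) x.
Proof.
  symmetry. apply opp_uniq.
  assert (E : badd (bscal (v1 F) x) (bscal (vopp F (v1 F)) x) = b0 A).
  { rewrite <- bscal_addl, vadd_opp. apply scal_v0. }
  rewrite bscal_1 in E. exact E.
Qed.

Lemma norm0 : bnorm (b0 A) = 0.
Proof. apply bnorm_eq0. reflexivity. Qed.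

Lemma norm_opp (x : A) : bnorm (bopp x) = vabs F (vopp F (v1 F)) * bnorm x.
Proof. rewrite opp_scal. apply bnorm_scal. Qed.

Lemma norm_nonneg (x : A) : 0 <= bnorm x.
Proof.
  pose proof (bnorm_triangle _ _ x (bopp x)) as h.
  rewrite badd_opp, norm0, norm_opp in h.
  pose proof (vabs_nonneg F (vopp F (v1 F))). nra.
Qed.

Lemma opp_sub (x y : A) : bopp (badd x (bopp y)) = badd y (bopp x).
Proof. symmetry. apply opp_uniq. rewrite shuffle, badd_opp. reflexivity. Qed.

Lemma add4 (a b c d : A) : badd (badd a b) (badd c d) = badd (badd a c) (badd b d).
Proof.
  rewrite !badd_assoc. f_equal.
  rewrite <- !badd_assoc. f_equal. apply badd_comm.
Qed.

Lemma limit_eq (x y : A) (C : R) : 0 <= C ->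
  (forall e, 0 < e -> bnorm (badd x (bopp y)) <= e * C) -> x = y.
Proof.
  intros HC H. apply subr0_eq. apply bnorm_eq0.
  pose proof (norm_nonneg (badd x (bopp y))) as Hn.
  set (d := bnorm (badd x (bopp y))) in *.
  destruct (Req_dec d 0) as [Hd|Hd]; auto. exfalso.
  set (e := d / (2 * (C + 1))).
  assert (He : e * (2 * (C + 1)) = d) by (unfold e; field; lra).
  assert (Hep : 0 < e) by (unfold e; apply Rdiv_lt_0_compat; lra).
  specialize (H e Hep). nra.
Qed.

Lemma apow1_center (a0 : A) : in_center a0 -> forall k, in_center (apow1 a0 k).
Proof.
  intros Hc k. induction k as [|k IH]; simpl; auto.
  intro a. rewrite <- bmul_assoc, IH, bmul_assoc, Hc, <- bmul_assoc. reflexivity.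
Qed.

Lemma center_rearr (P x z : A) : in_center P -> bmul P (bmul x z) = bmul x (bmul P z).
Proof. intro HP. rewrite bmul_assoc, (HP x), <- bmul_assoc. reflexivity. Qed.

Lemma prodn_S (g : nat -> A) k l : prodn g k (S l) = bmul (g k) (prodn g (S k) l).
Proof. reflexivity. Qed.

Lemma prod_pow (g : nat -> A) (a0 y : A) l : forall k,
  (forall i, (k <= i <= k + l)%nat -> g i = a0) -> g (S (k + l)) = y ->
  prodn g k (S l) = bmul (apow1 a0 l) y.
Proof.
  induction l as [|l IH]; intros k Hg Hy.
  - rewrite prodn_S. simpl. rewrite Hg by lia. rewrite Nat.add_0_r in Hy. rewrite Hy. reflexivity.
  - rewrite prodn_S. rewrite (IH (S k)).
    + rewrite Hg by lia. simpl. apply bmul_assoc.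
    + intros i Hi. apply Hg. lia.
    + replace (S (S k + l)) with (S (k + S l)) by lia. exact Hy.
Qed.

Lemma prod_snoc (g : nat -> A) l : forall k,
  prodn g k (S l) = bmul (prodn g k l) (g (S (k + l))).
Proof.
  induction l as [|l IH]; intro k.
  - simpl. rewrite Nat.add_0_r. reflexivity.
  - rewrite (prodn_S g k (S l)), IH, (prodn_S g k l), bmul_assoc.
    replace (S k + l)%nat with (k + S l)%nat by lia. reflexivity.
Qed.

Lemma prodn_ext (a b : nat -> A) l : forall k,
  (forall i, (k <= i <= k + l)%nat -> a i = b i) -> prodn a k l = prodn b k l.
Proof.
  induction l as [|l IH]; intros k H; simpl.
  - apply H. lia.
  - rewrite H by lia. f_equal. apply IH. intros; apply H; lia.
Qed.

Lemma prodn_shift (a : nat -> A) l : forall k,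
  prodn (fun i => a (S i)) k l = prodn a (S k) l.
Proof.
  induction l as [|l IH]; intro k; simpl; auto. rewrite IH. reflexivity.
Qed.

Lemma prodn_merge (a b : nat -> A) l : forall k,
  (forall i, (k <= i < k + l)%nat -> b i = a i) ->
  b (k + l)%nat = bmul (a (k + l)%nat) (a (S (k + l))) ->
  prodn b k l = prodn a k (S l).
Proof.
  induction l as [|l IH]; intros k H1 H2.
  - simpl. rewrite Nat.add_0_r in H2. exact H2.
  - rewrite (prodn_S b k l), (prodn_S a k (S l)). rewrite H1 by lia. f_equal.
    apply IH.
    + intros; apply H1; lia.
    + replace (S k + l)%nat with (k + S l)%nat by lia. exact H2.
Qed.

Lemma L1 (a0 : A) j (U : A -> A) x y : Mul (S (S (S j))) U ->
  U (bmul x (bmul (apow1 a0 j) y)) = bmul x (U (bmul (apow1 a0 j) y)).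
Proof.
  intros [_ H].
  pose (g := fun i => if Nat.eqb i 1 then x else if Nat.eqb i (S (S (S j))) then y else a0).
  destruct (H g) as [H1 _].
  replace (S (S (S j)) - 1)%nat with (S (S j)) in H1 by lia.
  replace (S (S (S j)) - 2)%nat with (S j) in H1 by lia.
  rewrite (prodn_S g 1 (S j)) in H1.
  assert (E : prodn g 2 (S j) = bmul (apow1 a0 j) y).
  { apply prod_pow.
    - intros i Hi. unfold g.
      rewrite (proj2 (Nat.eqb_neq i 1)) by lia.
      rewrite (proj2 (Nat.eqb_neq i (S (S (S j))))) by lia. reflexivity.
    - unfold g. simpl. rewrite Nat.eqb_refl. reflexivity. }
  rewrite E in H1. exact H1.
Qed.

Lemma L2 (a0 : A) j (U : A -> A) y z : Mul (S (S (S j))) U ->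
  U (bmul (bmul (apow1 a0 j) y) z) = bmul (U (bmul (apow1 a0 j) y)) z.
Proof.
  intros [_ H].
  pose (h := fun i => if Nat.eqb i (S (S j)) then y else if Nat.eqb i (S (S (S j))) then z else a0).
  destruct (H h) as [_ H2].
  replace (S (S (S j)) - 1)%nat with (S (S j)) in H2 by lia.
  replace (S (S (S j)) - 2)%nat with (S j) in H2 by lia.
  assert (E : prodn h 1 (S j) = bmul (apow1 a0 j) y).
  { apply prod_pow.
    - intros i Hi. unfold h.
      rewrite (proj2 (Nat.eqb_neq i (S (S j)))) by lia.
      rewrite (proj2 (Nat.eqb_neq i (S (S (S j))))) by lia. reflexivity.
    - unfold h. simpl. rewrite Nat.eqb_refl. reflexivity. }
  assert (Ez : h (S (S (S j))) = z).
  { unfold h. rewrite (proj2 (Nat.eqb_neq (S (S (S j))) (S (S j)))) by lia.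
    rewrite Nat.eqb_refl. reflexivity. }
  rewrite (prod_snoc h (S j) 1) in H2.
  simpl (S (1 + S j))%nat in H2.
  rewrite E, Ez in H2. exact H2.
Qed.

Lemma Mul_up j (T : A -> A) : Mul (S (S j)) T -> Mul (S (S (S j))) T.
Proof.
  intros [HB H]. split; [exact HB|]. intro a.
  replace (S (S (S j)) - 1)%nat with (S (S j)) by lia.
  replace (S (S (S j)) - 2)%nat with (S j) by lia.
  split.
  - pose (b := fun i => if Nat.eqb i (S (S j)) then bmul (a (S (S j))) (a (S (S (S j)))) else a i).
    destruct (H b) as [H1 _].
    replace (S (S j) - 1)%nat with (S j) in H1 by lia.
    replace (S (S j) - 2)%nat with j in H1 by lia.
    rewrite (prodn_merge a b (S j) 1), (prodn_merge a b j 2) in H1.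
    + exact H1.
    + intros i Hi. unfold b. rewrite (proj2 (Nat.eqb_neq i (S (S j)))) by lia. reflexivity.
    + unfold b. simpl. rewrite Nat.eqb_refl. reflexivity.
    + intros i Hi. unfold b. rewrite (proj2 (Nat.eqb_neq i (S (S j)))) by lia. reflexivity.
    + unfold b. simpl. rewrite Nat.eqb_refl. reflexivity.
  - pose (c := fun i => if Nat.eqb i 1 then bmul (a 1%nat) (a 2%nat) else a (S i)).
    destruct (H c) as [_ H2].
    replace (S (S j) - 1)%nat with (S j) in H2 by lia.
    replace (S (S j) - 2)%nat with j in H2 by lia.
    assert (Ec : forall l, prodn c 1 l = prodn a 1 (S l)).
    { intros [|l].
      - reflexivity.
      - rewrite (prodn_S c 1 l).
        rewrite (prodn_ext c (fun i => a (S i)) l 2).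
        + rewrite prodn_shift. change (c 1%nat) with (bmul (a 1%nat) (a 2%nat)).
          rewrite <- bmul_assoc. reflexivity.
        + intros i Hi. unfold c. rewrite (proj2 (Nat.eqb_neq i 1)) by lia. reflexivity. }
    rewrite !Ec in H2. exact H2.
Qed.

Lemma BL_comp (P : A) (U T : A -> A) : bounded_linear U -> bounded_linear T ->
  bounded_linear (fun x => U (bmul P (T x))).
Proof.
  intros [Ua [Us [MU HU]]] [Ta [Ts [MT HT]]]. split; [|split].
  - intros x y. rewrite Ta, bmul_addr, Ua. reflexivity.
  - intros c x. rewrite Ts, bmul_scalr, Us. reflexivity.
  - exists (Rmax MU 0 * bnorm P * Rmax MT 0). intro x.
    replace (Rmax MU 0 * bnorm P * Rmax MT 0 * bnorm x)
      with (Rmax MU 0 * (bnorm P * (Rmax MT 0 * bnorm x))) by ring.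
    apply Rle_trans with (Rmax MU 0 * bnorm (bmul P (T x))).
    + apply Rle_trans with (MU * bnorm (bmul P (T x))); auto.
      apply Rmult_le_compat_r; [apply norm_nonneg|apply Rmax_l].
    + apply Rmult_le_compat_l; [apply Rmax_r|].
      apply Rle_trans with (bnorm P * bnorm (T x)); [apply bnorm_mul|].
      apply Rmult_le_compat_l; [apply norm_nonneg|].
      apply Rle_trans with (MT * bnorm x); auto.
      apply Rmult_le_compat_r; [apply norm_nonneg|apply Rmax_l].
Qed.

Lemma Mul2_use (T : A -> A) : Mul 2 T -> forall x y,
  T (bmul x y) = bmul x (T y) /\ T (bmul x y) = bmul (T x) y.
Proof.
  intros [_ H] x y. exact (H (fun i => if Nat.eqb i 1 then x else y)).
Qed.

End Aux.

Theorem mainTheorem8 (F : ValField) (A : BanachAlgebra F) (a0 : A)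
  (Ha0c : in_center a0) (Ha0nz : a0 <> b0 A) (Ha0n : bnorm a0 <= 1) :
  forall n : nat, (3 <= n)%nat ->
    (forall S T, Mul n S -> Mul 2 T -> Mul 2 (bullet n a0 S T)) /\
    closed_left_ideal n a0 (Mul (n - 1)).
Proof.
  intros n Hn. destruct n as [|[|[|j]]]; try lia.
  replace (S (S (S j)) - 1)%nat with (S (S j)) by lia.
  pose proof (apow1_center a0 Ha0c j) as HPc.
  set (P := apow1 a0 j) in *.
  assert (Eb : forall U T, bullet (S (S (S j))) a0 U T = fun x => U (bmul P (T x))).
  { intros. unfold bullet. replace (S (S (S j)) - 3)%nat with j by lia. reflexivity. }
  split.
  - intros U T HU HT. rewrite Eb. split.
    + apply BL_comp; [exact (proj1 HU)|exact (proj1 HT)].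
    + intro a. change (U (bmul P (T (bmul (a 1%nat) (a 2%nat))))
        = bmul (a 1%nat) (U (bmul P (T (a 2%nat))))
      /\ U (bmul P (T (bmul (a 1%nat) (a 2%nat))))
        = bmul (U (bmul P (T (a 1%nat)))) (a 2%nat)).
      destruct (Mul2_use T HT (a 1%nat) (a 2%nat)) as [T1 T2]. split.
      * rewrite T1, center_rearr by exact HPc. apply L1. exact HU.
      * rewrite T2, bmul_assoc. apply L2. exact HU.
  - split; [|split; [|split; [|split; [|split]]]].
    + intros T HT. apply Mul_up. exact HT.
    + split; [split; [|split]|].
      * intros x y. symmetry. apply badd_0.
      * intros c x. symmetry. apply scal0.
      * exists 0. intro x. rewrite norm0. lra.
      * intro a. split; symmetry; [apply mul0r|apply mul0l].
    + intros U T [[Ua [Us [MU HU]]] HU2] [[Ta [Ts [MT HT]]] HT2]. split; [split; [|split]|].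
      * intros x y. rewrite Ua, Ta. apply add4.
      * intros c x. rewrite Us, Ts. symmetry. apply bscal_addr.
      * exists (MU + MT). intro x. eapply Rle_trans; [apply bnorm_triangle|].
        rewrite Rmult_plus_distr_r. apply Rplus_le_compat; auto.
      * intro a. destruct (HU2 a) as [U1 U2]. destruct (HT2 a) as [T1 T2]. split.
        -- rewrite U1, T1, bmul_addr. reflexivity.
        -- rewrite U2, T2, bmul_addl. reflexivity.
    + intros c T [[Ta [Ts [MT HT]]] HT2]. split; [split; [|split]|].
      * intros x y. rewrite Ta. apply bscal_addr.
      * intros d x. rewrite Ts, !bscal_assoc, vmul_comm. reflexivity.
      * exists (vabs F c * MT). intro x. rewrite bnorm_scal, Rmult_assoc.
        apply Rmult_le_compat_l; [apply vabs_nonneg|auto].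
      * intro a. destruct (HT2 a) as [T1 T2]. split.
        -- rewrite T1, bmul_scalr. reflexivity.
        -- rewrite T2, bmul_scall. reflexivity.
    + intros U T HU HT. rewrite Eb. split.
      * apply BL_comp; [exact (proj1 HU)|exact (proj1 HT)].
      * intro a. destruct (proj2 HT a) as [T1 T2].
        replace (S (S j) - 1)%nat with (S j) in * by lia.
        replace (S (S j) - 2)%nat with j in * by lia.
        split.
        -- rewrite T1, center_rearr by exact HPc. apply L1. exact HU.
        -- rewrite T2, bmul_assoc. apply L2. exact HU.
    + intros Tk T HTk HT Hconv. split; [exact (proj1 HT)|]. intro a.
      replace (S (S j) - 1)%nat with (S j) by lia.
      replace (S (S j) - 2)%nat with j by lia.
      pose (k1 := vabs F (vopp F (v1 F))).
      assert (Hk1 : 0 <= k1) by apply vabs_nonneg.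
      split.
      * apply limit_eq with (C := k1 * bnorm (prodn a 1 (S j)) + bnorm (a 1%nat) * bnorm (prodn a 2 j)).
        { pose proof (norm_nonneg (prodn a 1 (S j))). pose proof (norm_nonneg (a 1%nat)).
          pose proof (norm_nonneg (prodn a 2 j)). nra. }
        intros e He. destruct (Hconv e He) as [N HN].
        pose proof (HN N (le_n N)) as HN'.
        pose proof (proj2 (HTk N) a) as K.
        replace (S (S j) - 1)%nat with (S j) in K by lia.
        replace (S (S j) - 2)%nat with j in K by lia.
        destruct K as [K1 _].
        set (p := prodn a 1 (S j)) in *. set (q := prodn a 2 j) in *.
        assert (E : badd (T p) (bopp (bmul (a 1%nat) (T q)))
          = badd (bopp (badd (Tk N p) (bopp (T p))))
                 (bmul (a 1%nat) (badd (Tk N q) (bopp (T q))))).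
        { rewrite opp_sub, bmul_addr, bmul_oppr, <- K1, shuffle. reflexivity. }
        rewrite E. eapply Rle_trans; [apply bnorm_triangle|].
        rewrite norm_opp. fold k1.
        pose proof (HN' p) as h1. pose proof (HN' q) as h3.
        pose proof (bnorm_mul _ _ (a 1%nat) (badd (Tk N q) (bopp (T q)))) as h2.
        pose proof (norm_nonneg (a 1%nat)) as h4.
        assert (k1 * bnorm (badd (Tk N p) (bopp (T p))) <= k1 * (e * bnorm p))
          by (apply Rmult_le_compat_l; auto).
        assert (bnorm (a 1%nat) * bnorm (badd (Tk N q) (bopp (T q))) <= bnorm (a 1%nat) * (e * bnorm q))
          by (apply Rmult_le_compat_l; auto).
        lra.
      * apply limit_eq with (C := k1 * bnorm (prodn a 1 (S j)) + bnorm (prodn a 1 j) * bnorm (a (S (S j)))).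
        { pose proof (norm_nonneg (prodn a 1 (S j))). pose proof (norm_nonneg (a (S (S j)))).
          pose proof (norm_nonneg (prodn a 1 j)). nra. }
        intros e He. destruct (Hconv e He) as [N HN].
        pose proof (HN N (le_n N)) as HN'.
        pose proof (proj2 (HTk N) a) as K.
        replace (S (S j) - 1)%nat with (S j) in K by lia.
        replace (S (S j) - 2)%nat with j in K by lia.
        destruct K as [_ K2].
        set (p := prodn a 1 (S j)) in *. set (q := prodn a 1 j) in *.
        set (z := a (S (S j))) in *.
        assert (E : badd (T p) (bopp (bmul (T q) z))
          = badd (bopp (badd (Tk N p) (bopp (T p))))
                 (bmul (badd (Tk N q) (bopp (T q))) z)).
        { rewrite opp_sub, bmul_addl, bmul_oppl, <- K2, shuffle. reflexivity. }
        rewrite E. eapply Rle_trans; [apply bnorm_triangle|].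
        rewrite norm_opp. fold k1.
        pose proof (HN' p) as h1. pose proof (HN' q) as h3.
        pose proof (bnorm_mul _ _ (badd (Tk N q) (bopp (T q))) z) as h2.
        pose proof (norm_nonneg z) as h4.
        assert (k1 * bnorm (badd (Tk N p) (bopp (T p))) <= k1 * (e * bnorm p))
          by (apply Rmult_le_compat_l; auto).
        assert (bnorm (badd (Tk N q) (bopp (T q))) * bnorm z <= (e * bnorm q) * bnorm z)
          by (apply Rmult_le_compat_r; auto).
        lra.
Qed.
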